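(* Let $\mathbf{A},\mathbf{B},\mathbf{C}$ be trees with $\mathbf{A}$ infinite. If $\mathbf{A}\mathbf{B}=\mathbf{A}\mathbf{C}$, then $\mathbf{B}=\mathbf{C}$.
   Context: A tree is a (possibly empty, possibly infinite) rooted in-tree in which every vertex has finitely many in-neighbours: an acyclic weakly connected digraph with a root having no outgoing arc, every other vertex having exactly one outgoing arc (to its parent), arcs directed towards the root. Trees are considered up to isomorphism. The depth of a vertex is its distance to the root. The product of trees $\mathbf{F},\mathbf{G}$ has vertex set $\{(a,b):\operatorname{depth}(a)=\operatorname{depth}(b)\}$ and an arc $(a,b)\to(a',b')$ whenever $a\to a'$ and $b\to b'$ are arcs of $\mathbf{F}$ and $\mathbf{G}$ respectively. *)

(* Defs.v *)
From Stdlib Require Import List.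

(* A "rooted digraph" in which every vertex has at most one outgoing arc:
   par x = Some y  means the arc x -> y (y is the parent of x),
   par x = None    means x has no outgoing arc (x is a root). *)
Record rgraph := RG { vtx : Type; par : vtx -> option vtx }.

Arguments par {r} _.

Fixpoint anc (T : rgraph) (n : nat) (x : vtx T) : option (vtx T) :=
  match n with
  | 0 => Some x
  | S m => match par x with Some y => anc T m y | None => None end
  end.

(* A tree: at most one root, every vertex reaches the root in finitely many
   steps (so acyclic, weakly connected, the root is the unique vertex without
   outgoing arc when nonempty), and every vertex has finitely many in-neighbours.
   The empty tree is allowed. *)
Definition is_tree (T : rgraph) : Prop :=
  (forall x y : vtx T, par x = None -> par y = None -> x = y) /\
  (forall x : vtx T, exists n, anc T n x = None) /\
  (forall y : vtx T, exists l : list (vtx T), forall x, par x = Some y -> In x l).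

Definition infinite_tree (T : rgraph) : Prop :=
  ~ exists l : list (vtx T), forall x : vtx T, In x l.

Definition same_depth (F G : rgraph) (a : vtx F) (b : vtx G) : Prop :=
  forall n, anc F n a = None <-> anc G n b = None.

Lemma same_depth_par (F G : rgraph) (a a' : vtx F) (b b' : vtx G) :
  same_depth F G a b -> par a = Some a' -> par b = Some b' -> same_depth F G a' b'.
Proof.
  intros H Ha Hb n. specialize (H (S n)). simpl in H. rewrite Ha, Hb in H. exact H.
Qed.

(* The product of trees: vertices are pairs of vertices of equal depth, with an
   arc (a,b) -> (a',b') iff a -> a' and b -> b'. *)
Definition prod_vtx (F G : rgraph) : Type :=
  { p : vtx F * vtx G | same_depth F G (fst p) (snd p) }.

Definition prod_par (F G : rgraph) (x : prod_vtx F G) : option (prod_vtx F G) :=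
  match x with
  | exist _ (a, b) H =>
    match par a as oa return par a = oa -> option (prod_vtx F G) with
    | Some a' => fun Ha =>
      match par b as ob return par b = ob -> option (prod_vtx F G) with
      | Some b' => fun Hb =>
          Some (exist _ (a', b') (same_depth_par F G a a' b b' H Ha Hb))
      | None => fun _ => None
      end eq_refl
    | None => fun _ => None
    end eq_refl
  end.

Definition tprod (F G : rgraph) : rgraph := RG (prod_vtx F G) (prod_par F G).

Definition iso (F G : rgraph) : Prop :=
  exists (f : vtx F -> vtx G) (g : vtx G -> vtx F),
    (forall x, g (f x) = x) /\ (forall y, f (g y) = y) /\
    (forall x, par (f x) = option_map f (par x)).

(* Main.v *)
Require Import Defs.
From Stdlib Require Import List Arith Lia ZArith Permutation Classical ClassicalEpsilon ProofIrrelevance.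
Import ListNotations.

Lemma NoDup_map_inj {A B} (f : A -> B) l :
  (forall x y, f x = f y -> x = y) -> NoDup l -> NoDup (map f l).
Proof.
  intros Hf H; induction H; simpl; constructor; auto.
  intros Hin; apply in_map_iff in Hin as [y [Hy Hy']]. apply Hf in Hy; subst; auto.
Qed.

Lemma NoDup_prod {A B} (l1 : list A) (l2 : list B) :
  NoDup l1 -> NoDup l2 -> NoDup (list_prod l1 l2).
Proof.
  intros H1 H2; induction H1; simpl; [constructor|].
  apply NoDup_app; auto.
  - apply NoDup_map_inj; auto. intros a b E; inversion E; auto.
  - intros [a b] Ha Hb. apply in_map_iff in Ha as [y [Hy _]]. inversion Hy; subst.
    apply in_prod_iff in Hb as [Hb _]. auto.
Qed.

Lemma sum_perm {A} (f : A -> nat) l l' : Permutation l l' ->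
  list_sum (map f l) = list_sum (map f l').
Proof. intros P. apply Permutation_list_sum. apply Permutation_map; auto. Qed.

Lemma sum_prod {A B} (f : A -> nat) (g : B -> nat) l1 l2 :
  list_sum (map (fun p => f (fst p) * g (snd p)) (list_prod l1 l2)) =
  list_sum (map f l1) * list_sum (map g l2).
Proof.
  induction l1; simpl; auto.
  rewrite map_app, list_sum_app, IHl1, map_map. simpl.
  rewrite Nat.mul_add_distr_r. f_equal.
  clear. induction l2; simpl; lia.
Qed.

Lemma sum_pos {A} (f : A -> nat) l a : In a l -> 0 < f a -> 0 < list_sum (map f l).
Proof. induction l; simpl; [tauto|]. intros [->|H] Hp; [lia|]. specialize (IHl H Hp); lia. Qed.

Lemma anc_add T n m (d : vtx T) :
  anc T (n + m) d = match anc T n d with Some y => anc T m y | None => None end.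
Proof.
  revert d; induction n; intros d; simpl; auto.
  destruct (par d); auto.
Qed.

Lemma anc_S T n (d : vtx T) :
  anc T (S n) d = match anc T n d with Some y => par y | None => None end.
Proof.
  replace (S n) with (n + 1) by lia. rewrite anc_add.
  destruct (anc T n d); simpl; auto. destruct (par v); auto.
Qed.

Lemma root_anc T (r : vtx T) n : par r = None -> (anc T n r = None <-> n <> 0).
Proof. intros H; destruct n; simpl; [split; congruence|]. rewrite H; split; auto. Qed.

Lemma reach_root T (d : vtx T) M : anc T M d = None ->
  exists m z, anc T m d = Some z /\ par z = None.
Proof.
  revert d; induction M; intros d H; simpl in H; [discriminate|].
  destruct (par d) eqn:E.
  - destruct (IHM _ H) as [m [z [H1 H2]]]. exists (S m), z; simpl; rewrite E; auto.
  - exists 0, d; auto.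
Qed.

Lemma deep_le T (d a : vtx T) m k : anc T m d = Some a -> k <= m ->
  exists d', anc T k d' = Some a.
Proof.
  intros H Hk. replace m with ((m - k) + k) in H by lia. rewrite anc_add in H.
  destruct (anc T (m - k) d) as [d'|]; [exists d'; auto|discriminate].
Qed.

Lemma depth_unique T (d z z' : vtx T) m m' : anc T m d = Some z -> par z = None ->
  anc T m' d = Some z' -> par z' = None -> m = m'.
Proof.
  intros H1 H2 H3 H4.
  destruct (Nat.lt_trichotomy m m') as [Hl|[He|Hl]]; auto; exfalso.
  - replace m' with (m + (S (m' - m - 1))) in H3 by lia. rewrite anc_add, H1 in H3.
    simpl in H3; rewrite H2 in H3; discriminate.
  - replace m with (m' + (S (m - m' - 1))) in H1 by lia. rewrite anc_add, H3 in H1.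
    simpl in H1; rewrite H4 in H1; discriminate.
Qed.

Definition chspec (T : rgraph) (ch : vtx T -> list (vtx T)) :=
  forall y, NoDup (ch y) /\ forall x, In x (ch y) <-> par x = Some y.

Lemma exact_list {T Q : Type} (g : T -> Q) (P : T -> Prop) (M : list Q) :
  (forall x y, g x = g y -> x = y) -> (forall x, P x -> In (g x) M) ->
  exists l, NoDup l /\ forall x, In x l <-> P x.
Proof.
  intros Hg HM.
  assert (forall M', exists l, NoDup l /\ forall x, In x l <-> (P x /\ In (g x) M')).
  { induction M' as [|q M' IH].
    - exists []; split; [constructor|]. simpl; tauto.
    - destruct IH as [l [Hl1 Hl2]].
      destruct (classic (exists x, g x = q /\ P x /\ ~ In x l)) as [[x [Hx1 [Hx2 Hx3]]]|Hn].
      + exists (x :: l); split; [constructor; auto|].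
        intros y; simpl; rewrite Hl2; split.
        * intros [<-|[? ?]]; subst; auto.
        * intros [Py [Hq|Hi]]; auto.
          destruct (classic (In y l)) as [Hy|Hy]; [rewrite Hl2 in Hy; tauto|].
          left; apply Hg; congruence.
      + exists l; split; auto. intros y; rewrite Hl2; simpl; split; [tauto|].
        intros [Py [Hq|Hi]]; auto. split; auto.
        destruct (classic (In y l)) as [Hy|Hy]; [rewrite Hl2 in Hy; tauto|].
        exfalso; apply Hn; exists y; auto. }
  destruct (H M) as [l [H1 H2]]; exists l; split; auto.
  intros x; rewrite H2; split; [tauto|]. intros; split; auto.
Qed.

Lemma get_ch T : (forall y : vtx T, exists l, NoDup l /\ forall x, In x l <-> par x = Some y) ->
  { ch | chspec T ch }.
Proof.
  intros H. exists (fun y => proj1_sig (constructive_indefinite_description _ (H y))).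
  intros y. destruct (constructive_indefinite_description _ (H y)); simpl; auto.
Qed.

Lemma tree_ch T : is_tree T -> { ch | chspec T ch }.
Proof.
  intros [_ [_ H]]. apply get_ch. intros y. destruct (H y) as [l Hl].
  apply (exact_list (fun x => x) _ l); auto.
Qed.
Lemma prod_par_eq F G (x : prod_vtx F G) :
  option_map (@proj1_sig _ _) (prod_par F G x) =
  match par (fst (proj1_sig x)), par (snd (proj1_sig x)) with
  | Some a', Some b' => Some (a', b') | _, _ => None end.
Proof.
  destruct x as [[a b] H]. unfold prod_par. simpl.
  generalize (same_depth_par F G a). 
  generalize (par a). intros [a'|] sdp; [|reflexivity].
  generalize (sdp a' b). generalize (par b). intros [b'|] s; reflexivity.
Qed.

Lemma proj_inj F G (p q : prod_vtx F G) : proj1_sig p = proj1_sig q -> p = q.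
Proof. destruct p, q; simpl; intros ->. f_equal. apply proof_irrelevance. Qed.

Lemma prod_par_Some F G (q p : vtx (tprod F G)) :
  par q = Some p <-> par (fst (proj1_sig q)) = Some (fst (proj1_sig p)) /\
                     par (snd (proj1_sig q)) = Some (snd (proj1_sig p)).
Proof.
  pose proof (prod_par_eq F G q) as E. simpl. split.
  - intros H. rewrite H in E. simpl in E.
    destruct (par (fst (proj1_sig q))), (par (snd (proj1_sig q))); try discriminate.
    injection E as E'. rewrite E'; simpl; auto.
  - intros [H1 H2]. rewrite H1, H2 in E.
    destruct (prod_par F G q) as [p'|]; try discriminate. simpl in E. injection E as E'.
    f_equal. apply proj_inj. rewrite E'. destruct (proj1_sig p); auto.
Qed.

Lemma prod_par_None F G (q : vtx (tprod F G)) :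
  par q = None <-> par (fst (proj1_sig q)) = None \/ par (snd (proj1_sig q)) = None.
Proof.
  pose proof (prod_par_eq F G q) as E. simpl. split.
  - intros H. rewrite H in E. simpl in E.
    destruct (par (fst (proj1_sig q))), (par (snd (proj1_sig q))); try discriminate; auto.
  - intros Hn. destruct (prod_par F G q); auto. simpl in E.
    destruct Hn as [Hn|Hn]; rewrite Hn in E; [discriminate|].
    destruct (par (fst (proj1_sig q))); discriminate.
Qed.

Lemma prod_ch F G chF chG : chspec F chF -> chspec G chG ->
  { ch | chspec (tprod F G) ch }.
Proof.
  intros HF HG. apply get_ch. intros p.
  apply (exact_list (@proj1_sig _ _) _ (list_prod (chF (fst (proj1_sig p))) (chG (snd (proj1_sig p))))).
  - apply proj_inj.
  - intros q Hq. apply prod_par_Some in Hq as [H1 H2].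
    destruct (proj1_sig q) as [a b] eqn:E. simpl in *. apply in_prod; [apply HF|apply HG]; auto.
Qed.

Lemma prod_ch_perm F G chF chG chP : chspec F chF -> chspec G chG -> chspec (tprod F G) chP ->
  forall p, Permutation (map (@proj1_sig _ _) (chP p))
                        (list_prod (chF (fst (proj1_sig p))) (chG (snd (proj1_sig p)))).
Proof.
  intros HF HG HP p. apply NoDup_Permutation.
  - apply NoDup_map_inj; [apply proj_inj|apply HP].
  - apply NoDup_prod; [apply HF|apply HG].
  - intros [a' b']. rewrite in_map_iff, in_prod_iff. split.
    + intros [q [Hq Hi]]. apply HP in Hi. apply prod_par_Some in Hi as [H1 H2].
      rewrite Hq in H1, H2. simpl in *. split; [apply HF|apply HG]; auto.
    + intros [H1 H2]. apply HF in H1. apply HG in H2.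
      assert (Hs : same_depth F G a' b').
      { intros n. destruct p as [[a b] Hp]. simpl in *.
        destruct n; simpl; [split; discriminate|]. rewrite H1, H2. apply Hp. }
      exists (exist _ (a', b') Hs). split; auto. apply HP. apply prod_par_Some. simpl; auto.
Qed.


Inductive ft := Node : list ft -> ft.

Fixpoint prodl (l : list nat) : nat := match l with [] => 1 | a :: l => a * prodl l end.

Lemma prodl_app l1 l2 : prodl (l1 ++ l2) = prodl l1 * prodl l2.
Proof. induction l1; simpl; lia. Qed.

Section Ind.
Variable P : ft -> Prop.
Hypothesis HP : forall xs, Forall P xs -> P (Node xs).
Fixpoint ft_ind' (x : ft) : P x :=
  match x with Node xs => HP xs ((fix f l : Forall P l := match l with
     | [] => Forall_nil _ | y :: l' => Forall_cons _ (ft_ind' y) (f l') end) xs) end.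
End Ind.

Fixpoint height (x : ft) : nat :=
  match x with Node xs => list_max (map (fun y => S (height y)) xs) end.

Fixpoint hom (T : rgraph) (ch : vtx T -> list (vtx T)) (x : ft) (v : vtx T) : nat :=
  match x with Node xs =>
    prodl (map (fun y => list_sum (map (hom T ch y) (ch v))) xs) end.

Lemma hom_glue T ch xs1 xs2 v :
  hom T ch (Node (xs1 ++ xs2)) v = hom T ch (Node xs1) v * hom T ch (Node xs2) v.
Proof. simpl. rewrite map_app, prodl_app. auto. Qed.

Lemma hom_unit T ch v : hom T ch (Node []) v = 1.
Proof. reflexivity. Qed.

Lemma hom_single T ch x v : hom T ch (Node [x]) v = list_sum (map (hom T ch x) (ch v)).
Proof. simpl. lia. Qed.

Lemma hom_prod F G chF chG chP : chspec F chF -> chspec G chG -> chspec (tprod F G) chP ->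
  forall x (p : vtx (tprod F G)),
  hom _ chP x p = hom F chF x (fst (proj1_sig p)) * hom G chG x (snd (proj1_sig p)).
Proof.
  intros HF HG HP x. induction x as [xs IH] using ft_ind'. intros p. simpl.
  induction IH as [|y xs Hy IH' IHl]; simpl; auto.
  rewrite IHl.
  assert (E : list_sum (map (hom _ chP y) (chP p)) =
     list_sum (map (hom F chF y) (chF (fst (proj1_sig p)))) *
     list_sum (map (hom G chG y) (chG (snd (proj1_sig p))))).
  { transitivity (list_sum (map (fun q => hom F chF y (fst q) * hom G chG y (snd q))
                     (map (@proj1_sig _ _) (chP p)))).
    { rewrite map_map. f_equal. apply map_ext; intros; apply Hy. }
    rewrite (sum_perm _ _ _ (prod_ch_perm F G chF chG chP HF HG HP p)).
    apply (sum_prod (hom F chF y) (hom G chG y)). }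
  match goal with |- ?a * (?b * ?c) = _ =>
    transitivity ((list_sum (map (hom F chF y) (chF (fst (proj1_sig p)))) *
     list_sum (map (hom G chG y) (chG (snd (proj1_sig p))))) * (b * c)); [f_equal; exact E|lia] end.
Qed.

Lemma hom_iso F G chF chG (f : vtx F -> vtx G) (g : vtx G -> vtx F) :
  chspec F chF -> chspec G chG ->
  (forall x, g (f x) = x) -> (forall y, f (g y) = y) ->
  (forall x, par (f x) = option_map f (par x)) ->
  forall x v, hom G chG x (f v) = hom F chF x v.
Proof.
  intros HF HG gf fg Hp x. induction x as [xs IH] using ft_ind'. intros v. simpl.
  induction IH as [|y xs Hy IH' IHl]; simpl; auto.
  rewrite IHl. f_equal.
  assert (P : Permutation (map f (chF v)) (chG (f v))).
  { apply NoDup_Permutation.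
    - apply NoDup_map_inj; [|apply HF]. intros a b E. rewrite <- (gf a), E; auto.
    - apply HG.
    - intros c. rewrite in_map_iff. split.
      + intros [c0 [<- Hc]]. apply HG. rewrite Hp. apply HF in Hc. rewrite Hc. auto.
      + intros Hc. apply HG in Hc. exists (g c). split; auto. apply HF.
        rewrite <- (fg c), Hp in Hc. destruct (par (g c)) as [w|]; try discriminate.
        simpl in Hc. injection Hc as Hc. rewrite <- (gf w), Hc, gf. auto. }
  rewrite <- (sum_perm _ _ _ P), map_map. f_equal. apply map_ext; auto.
Qed.

Lemma in_max n l : In n l -> n <= list_max l.
Proof.
  intros H. pose proof (proj1 (list_max_le l (list_max l)) (le_n _)) as F.
  rewrite Forall_forall in F. auto.
Qed.

Lemma prodl_pos l : (forall n, In n l -> 0 < n) -> 0 < prodl l.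
Proof.
  induction l; simpl; intros H; auto.
  assert (0 < a) by auto. assert (0 < prodl l) by auto. nia.
Qed.

Lemma hom_pos T ch : chspec T ch -> forall x a d, anc T (height x) d = Some a -> 0 < hom T ch x a.
Proof.
  intros HT x. induction x as [xs IH] using ft_ind'. intros a d Hd.
  rewrite Forall_forall in IH. simpl. apply prodl_pos.
  intros n Hn. apply in_map_iff in Hn as [y [<- Hy]].
  assert (Hh : S (height y) <= height (Node xs)).
  { simpl. apply in_max. apply in_map with (f := fun y => S (height y)). auto. }
  destruct (deep_le T d a _ _ Hd Hh) as [d' Hd'].
  rewrite anc_S in Hd'. destruct (anc T (height y) d') as [c|] eqn:Ec; [|discriminate].
  apply (sum_pos _ _ c).
  - apply HT; auto.
  - apply (IH y Hy c d'); auto.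
Qed.


Definition sumZ (l : list Z) : Z := fold_right Z.add 0%Z l.

Lemma sumZ_nat {A} (f : A -> nat) l :
  Z.of_nat (list_sum (map f l)) = sumZ (map (fun w => Z.of_nat (f w)) l).
Proof. induction l; simpl; auto. rewrite Nat2Z.inj_add, IHl. auto. Qed.

Section Core.
Variables (W X : Type) (h : X -> W -> nat).
Hypothesis mulc : forall x1 x2, exists x, forall w, h x w = h x1 w * h x2 w.
Hypothesis unit : exists x, forall w, h x w = 1.

Inductive Lin : (W -> Z) -> Prop :=
| Lin0 : Lin (fun _ => 0%Z)
| LinS : forall c x g, Lin g -> Lin (fun w => c * Z.of_nat (h x w) + g w)%Z
| Linext : forall f g, Lin f -> (forall w, f w = g w) -> Lin g.

Lemma Lin_add f g : Lin f -> Lin g -> Lin (fun w => f w + g w)%Z.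
Proof.
  intros Hf Hg; induction Hf.
  - eapply Linext; [exact Hg|]. intros; cbv beta; lia.
  - eapply Linext; [apply (LinS c x _ IHHf)|]. intros; cbv beta; lia.
  - eapply Linext; [exact IHHf|]. intros w; simpl; rewrite H; auto.
Qed.

Lemma Lin_scale c f : Lin f -> Lin (fun w => c * f w)%Z.
Proof.
  intros Hf; induction Hf.
  - eapply Linext; [apply Lin0|]. intros; cbv beta; lia.
  - eapply Linext; [apply (LinS (c * c0) x _ IHHf)|]. intros; cbv beta; lia.
  - eapply Linext; [exact IHHf|]. intros w; simpl; rewrite H; auto.
Qed.

Lemma Lin_hmul x f : Lin f -> Lin (fun w => Z.of_nat (h x w) * f w)%Z.
Proof.
  intros Hf; induction Hf.
  - eapply Linext; [apply Lin0|]. intros; cbv beta; lia.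
  - destruct (mulc x x0) as [x1 Hx1].
    eapply Linext; [apply (LinS c x1 _ IHHf)|]. intros; cbv beta. rewrite Hx1, Nat2Z.inj_mul. lia.
  - eapply Linext; [exact IHHf|]. intros w; simpl; rewrite H; auto.
Qed.

Lemma Lin_mul f g : Lin f -> Lin g -> Lin (fun w => f w * g w)%Z.
Proof.
  intros Hf Hg; induction Hf.
  - eapply Linext; [apply Lin0|]. intros; cbv beta; lia.
  - eapply Linext; [apply (Lin_add _ _ (Lin_scale c _ (Lin_hmul x _ Hg)) IHHf)|].
    intros; cbv beta; ring.
  - eapply Linext; [exact IHHf|]. intros w; simpl; rewrite H; auto.
Qed.

Lemma Lin_h x : Lin (fun w => Z.of_nat (h x w)).
Proof. eapply Linext; [apply (LinS 1 x _ Lin0)|]. intros; cbv beta; lia. Qed.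

Lemma Lin_const c : Lin (fun _ => c).
Proof.
  destruct unit as [x Hx].
  eapply Linext; [apply (LinS c x _ Lin0)|]. intros; cbv beta; rewrite Hx; lia.
Qed.

Lemma Lin_good l1 l2 :
  (forall x, list_sum (map (h x) l1) = list_sum (map (h x) l2)) ->
  forall g, Lin g -> sumZ (map g l1) = sumZ (map g l2).
Proof.
  intros Hs g Hg; induction Hg.
  - clear Hs. assert (forall l, sumZ (map (fun _ : W => 0%Z) l) = 0%Z).
    { induction l; simpl; auto. }
    rewrite !H; auto.
  - assert (E : forall l, sumZ (map (fun w => c * Z.of_nat (h x w) + g w)%Z l) =
       (c * sumZ (map (fun w => Z.of_nat (h x w)) l) + sumZ (map g l))%Z).
    { induction l; simpl; [ring|]. rewrite IHl. ring. }
    rewrite !E, <- !sumZ_nat, Hs, IHHg. auto.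
  - rewrite <- (map_ext _ _ H), <- (map_ext _ _ H). auto.
Qed.

Lemma core u l1 l2 :
  (forall x, list_sum (map (h x) (u :: l1)) = list_sum (map (h x) l2)) ->
  exists v, In v l2 /\ forall x, h x u = h x v.
Proof.
  intros Hs. apply NNPP. intros Hn.
  assert (Hg : forall l, (forall v, In v l -> ~ forall x, h x u = h x v) ->
     exists g, Lin g /\ g u <> 0%Z /\ forall v, In v l -> g v = 0%Z).
  { induction l as [|v l IH]; intros Hl.
    - exists (fun _ => 1%Z). split; [apply Lin_const|]. simpl; split; [lia|tauto].
    - destruct IH as [g [Lg [Gu Gv]]]; [intros; apply Hl; simpl; auto|].
      destruct (not_all_ex_not _ _ (Hl v (or_introl eq_refl))) as [x Hx].
      exists (fun w => g w * (Z.of_nat (h x w) + (- Z.of_nat (h x v))))%Z. split; [|split].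
      + apply Lin_mul; auto. apply Lin_add; [apply Lin_h|apply Lin_const].
      + intros E. apply Z.eq_mul_0 in E. lia.
      + intros w [<-|Hw]; [lia|]. rewrite Gv; auto. }
  destruct (Hg l2) as [g [Lg [Gu Gv]]].
  { intros v Hv Hx. apply Hn. exists v; auto. }
  pose proof (Lin_good _ _ Hs _ (Lin_mul _ _ Lg Lg)) as E.
  assert (E2 : sumZ (map (fun w => g w * g w)%Z l2) = 0%Z).
  { clear -Gv. induction l2; simpl; auto. rewrite Gv, IHl2; simpl; auto.
    intros; apply Gv; simpl; auto. }
  assert (E3 : (0 <= sumZ (map (fun w => g w * g w)%Z l1))%Z).
  { clear. induction l1; simpl; nia. }
  simpl in E. nia.
Qed.

End Core.

Lemma bij (U V X : Type) (hU : X -> U -> nat) (hV : X -> V -> nat)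
  (mulc : forall x1 x2, exists x, (forall u, hU x u = hU x1 u * hU x2 u) /\
                                   (forall v, hV x v = hV x1 v * hV x2 v))
  (unit : exists x, (forall u, hU x u = 1) /\ (forall v, hV x v = 1))
  (du : U) (dv : V) :
  forall lb lc, NoDup lb -> NoDup lc ->
  (forall x, list_sum (map (hU x) lb) = list_sum (map (hV x) lc)) ->
  exists (s : U -> V) (t : V -> U),
    (forall b, In b lb -> In (s b) lc /\ t (s b) = b /\ forall x, hU x b = hV x (s b)) /\
    (forall c, In c lc -> In (t c) lb /\ s (t c) = c).
Proof.
  set (h := fun x (w : U + V) => match w with inl u => hU x u | inr v => hV x v end).
  assert (mulc' : forall x1 x2, exists x, forall w, h x w = h x1 w * h x2 w).
  { intros x1 x2. destruct (mulc x1 x2) as [x [H1 H2]]. exists x. intros [u|v]; simpl; auto. }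
  assert (unit' : exists x, forall w, h x w = 1).
  { destruct unit as [x [H1 H2]]. exists x. intros [u|v]; simpl; auto. }
  induction lb as [|u lb IH]; intros lc Nb Nc Hs.
  - destruct lc as [|c lc].
    + exists (fun _ => dv), (fun _ => du). simpl; split; tauto.
    + exfalso. destruct unit as [x [_ H2]]. specialize (Hs x). simpl in Hs. rewrite H2 in Hs. lia.
  - destruct (core (U + V) X h mulc' unit' (inl u) (map inl lb) (map inr lc)) as [w [Hw Hwu]].
    { intros x. simpl. rewrite !map_map. simpl. apply (Hs x). }
    apply in_map_iff in Hw as [v [<- Hv]]. simpl in Hwu.
    apply in_split in Hv as [l1 [l2 ->]].
    inversion Nb as [|? ? Nu Nb']; subst.
    destruct (IH (l1 ++ l2) Nb') as [s [t [Hst Hts]]].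
    { eapply NoDup_remove_1; eauto. }
    { intros x. specialize (Hs x). simpl in Hs. rewrite map_app, list_sum_app in Hs |- *.
      simpl in Hs. rewrite Hwu in Hs. lia. }
    pose proof (NoDup_remove_2 _ _ _ Nc) as Nv.
    exists (fun b => if excluded_middle_informative (b = u) then v else s b).
    exists (fun c => if excluded_middle_informative (c = v) then u else t c).
    split.
    + intros b Hb. destruct (excluded_middle_informative (b = u)) as [->|Hbu].
      * destruct (excluded_middle_informative (v = v)) as [_|]; [|congruence].
        split; [apply in_elt|]. split; auto.
      * destruct Hb as [->|Hb]; [congruence|]. destruct (Hst b Hb) as [H1 [H2 H3]].
        destruct (excluded_middle_informative (s b = v)) as [E|_].
        { rewrite E in H1; contradiction. }
        split; [|split; auto]. apply in_or_app. apply in_app_or in H1. simpl; tauto.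
    + intros c Hc. destruct (excluded_middle_informative (c = v)) as [->|Hcv].
      * destruct (excluded_middle_informative (u = u)) as [_|]; [|congruence].
        split; simpl; auto.
      * assert (Hc' : In c (l1 ++ l2)).
        { apply in_app_or in Hc. apply in_or_app. simpl in Hc. destruct Hc as [?|[?|?]]; auto; congruence. }
        destruct (Hts c Hc') as [H1 H2].
        destruct (excluded_middle_informative (t c = u)) as [E|_].
        { rewrite E in H1; contradiction. }
        split; simpl; auto.
Qed.


Lemma depth_fun T (r : vtx T) : is_tree T -> par r = None ->
  exists dep : vtx T -> nat, dep r = 0 /\ (forall b, dep b = 0 -> b = r) /\
    (forall b p, par b = Some p -> dep b = S (dep p)).
Proof.
  intros [Hu [Hr _]] Hroot.
  assert (Hex : forall b, exists m, exists z, anc T m b = Some z /\ par z = None).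
  { intros b. destruct (Hr b) as [M HM]. apply (reach_root T b M HM). }
  exists (fun b => proj1_sig (constructive_indefinite_description _ (Hex b))). split; [|split].
  - destruct (constructive_indefinite_description _ (Hex r)) as [m [z [H1 H2]]]; simpl.
    symmetry. apply (depth_unique T r r z 0 m); auto.
  - intros b. destruct (constructive_indefinite_description _ (Hex b)) as [m [z [H1 H2]]]; simpl.
    intros ->. simpl in H1. injection H1 as ->. auto.
  - intros b p Hb.
    destruct (constructive_indefinite_description _ (Hex b)) as [m [z [H1 H2]]]; simpl.
    destruct (constructive_indefinite_description _ (Hex p)) as [m' [z' [H1' H2']]]; simpl.
    apply (depth_unique T b z z' m (S m')); auto. simpl. rewrite Hb. auto.
Qed.

Definition walk {B C : rgraph} (sel : vtx B -> vtx C -> vtx B -> vtx C) (rC : vtx C) :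
  nat -> vtx B -> vtx C :=
  fix F n b := match n with 0 => rC | S m =>
    match par b with Some p => sel p (F m p) b | None => rC end end.

Lemma hom_mulc (B C : rgraph) chB chC : forall x1 x2 : ft, exists x,
  (forall u, hom B chB x u = hom B chB x1 u * hom B chB x2 u) /\
  (forall v, hom C chC x v = hom C chC x1 v * hom C chC x2 v).
Proof.
  intros [xs1] [xs2]. exists (Node (xs1 ++ xs2)). split; intros; apply hom_glue.
Qed.

Lemma build_iso (B C : rgraph) chB chC (rB : vtx B) (rC : vtx C) :
  is_tree B -> is_tree C -> chspec B chB -> chspec C chC ->
  par rB = None -> par rC = None ->
  (forall x, hom B chB x rB = hom C chC x rC) -> iso B C.
Proof.
  intros TB TC HB HC RB RC E0.
  set (E := fun b c => forall x, hom B chB x b = hom C chC x c).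
  set (spec := fun p q (st : (vtx B -> vtx C) * (vtx C -> vtx B)) =>
    (forall b, In b (chB p) -> In (fst st b) (chC q) /\ snd st (fst st b) = b /\ E b (fst st b)) /\
    (forall c, In c (chC q) -> In (snd st c) (chB p) /\ fst st (snd st c) = c)).
  assert (Hsel : forall p q, exists st, E p q -> spec p q st).
  { intros p q. destruct (classic (E p q)) as [Hpq|Hpq].
    - destruct (bij (vtx B) (vtx C) ft (hom B chB) (hom C chC) (hom_mulc B C chB chC))
        with (lb := chB p) (lc := chC q) as [s [t [H1 H2]]].
      + exists (Node []). split; intros; apply hom_unit.
      + exact p.
      + exact q.
      + apply HB.
      + apply HC.
      + intros x. rewrite <- !hom_single. apply Hpq.
      + exists (s, t). intros _. split; auto.
    - exists ((fun _ => q), (fun _ => p)). tauto. }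
  set (Sel := fun p q => proj1_sig (constructive_indefinite_description _ (Hsel p q))).
  assert (HS : forall p q, E p q -> spec p q (Sel p q)).
  { intros p q. unfold Sel. destruct (constructive_indefinite_description _ (Hsel p q)); auto. }
  destruct (depth_fun B rB TB RB) as [dB [dB0 [dB0' dBS]]].
  destruct (depth_fun C rC TC RC) as [dC [dC0 [dC0' dCS]]].
  set (wF := walk (fun p q => fst (Sel p q)) rC).
  set (wG := walk (C := B) (fun q p => snd (Sel p q)) rB).
  set (f := fun b => wF (dB b) b).
  set (g := fun c => wG (dC c) c).
  assert (Main : forall n,
    (forall b, dB b = n -> E b (f b) /\ dC (f b) = n /\ g (f b) = b /\ par (f b) = option_map f (par b)) /\
    (forall c, dC c = n -> E (g c) c /\ dB (g c) = n /\ f (g c) = c /\ par (g c) = option_map g (par c))).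
  { induction n as [|m [IHb IHc]].
    - split.
      + intros b Hb. apply dB0' in Hb as ->. unfold f. rewrite dB0. simpl.
        unfold g. rewrite dC0. simpl. rewrite RB, RC. auto.
      + intros c Hc. apply dC0' in Hc as ->. unfold g. rewrite dC0. simpl.
        unfold f. rewrite dB0. simpl. rewrite RB, RC. split; [intros x; apply E0|auto].
    - split.
      + intros b Hb. destruct (par b) as [p|] eqn:Hp.
        2: { exfalso. destruct TB as [U _]. rewrite (U b rB Hp RB), dB0 in Hb. discriminate. }
        pose proof (dBS b p Hp) as Hd. rewrite Hb in Hd. injection Hd as Hd.
        destruct (IHb p (eq_sym Hd)) as [Ep [Dp [Gp Pp]]].
        assert (Hfb : f b = fst (Sel p (f p)) b).
        { unfold f. rewrite Hb. simpl. rewrite Hp. unfold f. rewrite <- Hd. reflexivity. }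
        destruct (HS p (f p) Ep) as [S1 S2].
        assert (Hbp : In b (chB p)) by (apply HB; auto).
        destruct (S1 b Hbp) as [I1 [I2 I3]]. rewrite <- Hfb in I1, I2, I3.
        assert (Pf : par (f b) = Some (f p)) by (apply HC; auto).
        split; [auto|]. split; [rewrite (dCS _ _ Pf), Dp; auto|].
        split; [|rewrite Pf; auto].
        unfold g at 1. rewrite (dCS _ _ Pf), Dp. simpl. rewrite Pf.
        replace (wG m (f p)) with (g (f p)) by (unfold g; rewrite Dp; reflexivity).
        rewrite Gp. exact I2.
      + intros c Hc. destruct (par c) as [q|] eqn:Hq.
        2: { exfalso. destruct TC as [U _]. rewrite (U c rC Hq RC), dC0 in Hc. discriminate. }
        pose proof (dCS c q Hq) as Hd. rewrite Hc in Hd. injection Hd as Hd.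
        destruct (IHc q (eq_sym Hd)) as [Eq [Dq [Fq Pq]]].
        assert (Hgc : g c = snd (Sel (g q) q) c).
        { unfold g. rewrite Hc. simpl. rewrite Hq. unfold g. rewrite <- Hd. reflexivity. }
        destruct (HS (g q) q Eq) as [S1 S2].
        assert (Hcq : In c (chC q)) by (apply HC; auto).
        destruct (S2 c Hcq) as [I1 I2]. rewrite <- Hgc in I1, I2.
        assert (Pg : par (g c) = Some (g q)) by (apply HB; auto).
        split; [|split; [rewrite (dBS _ _ Pg), Dq; auto|split; [|rewrite Pg; auto]]].
        * destruct (S1 (g c) I1) as [_ [_ I3]]. rewrite I2 in I3. exact I3.
        * unfold f at 1. rewrite (dBS _ _ Pg), Dq. simpl. rewrite Pg.
          replace (wF m (g q)) with (f (g q)) by (unfold f; rewrite Dq; reflexivity).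
          rewrite Fq. exact I2. }
  exists f, g. split; [|split].
  - intros b. apply (proj1 (Main (dB b)) b eq_refl).
  - intros c. apply (proj2 (Main (dC c)) c eq_refl).
  - intros b. apply (proj1 (Main (dB b)) b eq_refl).
Qed.


Lemma children_cover T : is_tree T -> forall L : list (vtx T),
  exists l, forall y z, In z L -> par y = Some z -> In y l.
Proof.
  intros [_ [_ Hc]] L. induction L as [|z L [l IH]].
  - exists []; simpl; tauto.
  - destruct (Hc z) as [lz Hz]. exists (lz ++ l). intros y z' [<-|Hi] Hp; apply in_or_app; eauto.
Qed.

Lemma levels T : is_tree T -> forall k, exists l, forall y, anc T k y = None -> In y l.
Proof.
  intros HT k. induction k as [|k [l IH]].
  - exists []. simpl. discriminate.
  - destruct (children_cover T HT l) as [lc Hlc].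
    destruct (classic (exists r : vtx T, par r = None)) as [[r Hr]|Hn].
    + exists (r :: lc). intros y Hy. simpl in Hy. destruct (par y) as [z|] eqn:Hz.
      * right. apply (Hlc y z); auto.
      * left. destruct HT as [U _]. apply U; auto.
    + exists lc. intros y Hy. simpl in Hy. destruct (par y) as [z|] eqn:Hz.
      * apply (Hlc y z); auto.
      * exfalso; apply Hn; eauto.
Qed.

Lemma deep_root T (r : vtx T) : is_tree T -> infinite_tree T -> par r = None ->
  forall n, exists d, anc T n d = Some r.
Proof.
  intros HT Hinf Hr n.
  destruct (classic (exists d, anc T n d <> None)) as [[d Hd]|Hn].
  - destruct HT as [U [R C]]. destruct (R d) as [M HM].
    destruct (reach_root T d M HM) as [m [z [H1 H2]]].
    assert (z = r) by (apply U; auto). subst z.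
    assert (n <= m).
    { destruct (le_lt_dec n m); auto. exfalso. apply Hd.
      replace n with (m + S (n - m - 1)) by lia. rewrite anc_add, H1. simpl. rewrite H2. auto. }
    apply (deep_le T d r m n); auto.
  - exfalso. destruct (levels T HT n) as [l Hl]. apply Hinf. exists l. intros y.
    apply Hl. destruct (anc T n y) eqn:E; auto. exfalso; apply Hn. exists y. congruence.
Qed.

Lemma has_root T (v : vtx T) : is_tree T -> exists r : vtx T, par r = None.
Proof.
  intros [_ [R _]]. destruct (R v) as [M HM]. destruct (reach_root T v M HM) as [m [z [_ H]]]. eauto.
Qed.

Lemma roots_same_depth F G (a : vtx F) (b : vtx G) : par a = None -> par b = None ->
  same_depth F G a b.
Proof. intros Ha Hb n. rewrite (root_anc F a n Ha), (root_anc G b n Hb). tauto. Qed.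

Theorem mainTheorem11 (A B C : rgraph) :
  is_tree A -> is_tree B -> is_tree C -> infinite_tree A ->
  iso (tprod A B) (tprod A C) -> iso B C.
Proof.
  intros TA TB TC Hinf [phi [psi [H1 [H2 H3]]]].
  destruct (classic (inhabited (vtx A))) as [[a0]|NA].
  2: { exfalso. apply Hinf. exists []. intros x; apply NA; constructor; auto. }
  destruct (has_root A a0 TA) as [rA RA].
  destruct (classic (inhabited (vtx B))) as [[b0]|NB];
  destruct (classic (inhabited (vtx C))) as [[c0]|NC].
  - destruct (has_root B b0 TB) as [rB RB].
    destruct (has_root C c0 TC) as [rC RC].
    destruct (tree_ch A TA) as [chA HA].
    destruct (tree_ch B TB) as [chB HB].
    destruct (tree_ch C TC) as [chC HC].
    destruct (prod_ch A B chA chB HA HB) as [chAB HAB].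
    destruct (prod_ch A C chA chC HA HC) as [chAC HAC].
    apply (build_iso B C chB chC rB rC TB TC HB HC RB RC).
    set (pB := exist _ (rA, rB) (roots_same_depth A B rA rB RA RB) : vtx (tprod A B)).
    assert (Hq : par (phi pB) = None).
    { rewrite H3. assert (par pB = None) as ->; auto. apply prod_par_None. simpl; auto. }
    apply prod_par_None in Hq.
    assert (Hsd := proj2_sig (phi pB)). simpl in Hsd.
    destruct (proj1_sig (phi pB)) as [a c] eqn:Ep. simpl in Hq, Hsd.
    assert (Ha : par a = None /\ par c = None).
    { specialize (Hsd 1). simpl in Hsd. destruct (par a) as [v|], (par c) as [w|].
      - destruct Hq; discriminate.
      - exfalso. assert (Some v = None) by (apply Hsd; reflexivity). discriminate.
      - exfalso. assert (Some w = None) by (apply Hsd; reflexivity). discriminate.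
      - auto. }
    destruct Ha as [Ha Hc].
    pose proof TA as [UA _]. pose proof TC as [UC _].
    rewrite (UA a rA Ha RA) in Ep. rewrite (UC c rC Hc RC) in Ep.
    intros x.
    pose proof (hom_iso _ _ chAB chAC phi psi HAB HAC H1 H2 H3 x pB) as E1.
    rewrite (hom_prod A C chA chC chAC HA HC HAC), (hom_prod A B chA chB chAB HA HB HAB), Ep in E1.
    simpl in E1.
    assert (P : 0 < hom A chA x rA).
    { destruct (deep_root A rA TA Hinf RA (height x)) as [d Hd].
      apply (hom_pos A chA HA x rA d Hd). }
    apply (Nat.mul_cancel_l _ _ (hom A chA x rA)); lia.
  - exfalso. apply NC. destruct (has_root B b0 TB) as [rB RB]. constructor.
    exact (snd (proj1_sig (phi (exist _ (rA, rB) (roots_same_depth A B rA rB RA RB))))).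
  - exfalso. apply NB. destruct (has_root C c0 TC) as [rC RC]. constructor.
    exact (snd (proj1_sig (psi (exist _ (rA, rC) (roots_same_depth A C rA rC RA RC))))).
  - exists (fun b => False_rect _ (NB (inhabits b))), (fun c => False_rect _ (NC (inhabits c))).
    split; [|split]; intros x; exfalso; auto.
Qed.
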